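(* Let $n$ be an even positive integer, $\ell\ge 2$, and let $G$ be an $N$-AW graph on $n$ vertices with $|E(\overline{G})|=\frac{n}{2}+t$, where $t\ge 1$. Then the maximum degree of $\overline{G}$ is at most $t+1$.
   Context: All graphs are finite and simple; $\overline{G}$ is the complement. Labels lie in $\mathbb{Z}_\ell$. In the neighborhood Lights Out game, toggling a vertex $w$ adds $1$ (mod $\ell$) to the label of each vertex of the closed neighborhood $N[w]$; the game is won when all labels are $0$; a graph is $N$-AW if every initial labeling can be won. *)

(* Defs.v *)
From mathcomp Require Import all_boot all_order all_algebra.
Set Implicit Arguments. Unset Strict Implicit. Unset Printing Implicit Defensive.
Import GRing.Theory.
Local Open Scope ring_scope.

Definition simple_graph (T : finType) (adj : rel T) : Prop :=
  symmetric adj /\ irreflexive adj.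

Definition closed_nbhd (T : finType) (adj : rel T) (w : T) : {set T} :=
  [set v | (v == w) || adj w v].

Definition after_toggles (T : finType) (adj : rel T) (l : nat)
    (f : T -> 'Z_l) (s : seq T) (v : T) : 'Z_l :=
  f v + (count (fun w => v \in closed_nbhd adj w) s)%:R.

Definition N_AW (T : finType) (adj : rel T) (l : nat) : Prop :=
  forall f : T -> 'Z_l, exists s : seq T, forall v, after_toggles adj f s v = 0.

Definition compl_adj (T : finType) (adj : rel T) : rel T :=
  fun u v => (u != v) && ~~ adj u v.

Definition edge_set (T : finType) (adj : rel T) : {set {set T}} :=
  [set e : {set T} | [exists u, exists v, (adj u v) && (e == [set u; v])]].

Definition degree (T : finType) (adj : rel T) (v : T) : nat :=
  #|[set u | adj v u]|.

(* Main.v *)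
Require Import Defs.
From mathcomp Require Import all_boot all_order all_algebra.
From mathcomp Require Import zify.

Lemma card_bigcup_le (T : finType) (P : {set {set T}}) :
  (#|\bigcup_(e in P) e| <= \sum_(e in P) #|e|)%N.
Proof.
elim/big_ind2: _ => //; first by rewrite cards0.
move=> A a B b HA HB; apply: leq_trans (leq_add HA HB).
by rewrite cardsU leq_subr.
Qed.


Lemma notAW_of_twins (T : finType) (adj : rel T) (l : nat) (a b : T) :
  a != b -> (forall z, (a \in closed_nbhd adj z) = (b \in closed_nbhd adj z)) ->
  ~ N_AW adj l.
Proof.
move=> nab Hz HAW.
have [s Hs] := HAW (fun x => if x == a then 1%R else 0%R).
have := Hs a; have := Hs b.
rewrite /after_toggles eqxx eq_sym (negbTE nab).
have -> : count (fun w => b \in closed_nbhd adj w) s =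
          count (fun w => a \in closed_nbhd adj w) s.
  by apply: eq_count => z; rewrite Hz.
rewrite GRing.add0r => ->; rewrite GRing.addr0 => /eqP.
by rewrite GRing.oner_eq0.
Qed.

Theorem lemma4p11 (T : finType) (adj : rel T) (l n t : nat) :
  simple_graph adj ->
  #|T| = n -> (0 < n)%N -> ~~ odd n ->
  (2 <= l)%N ->
  N_AW adj l ->
  #|edge_set (compl_adj adj)| = (n %/ 2 + t)%N ->
  (1 <= t)%N ->
  forall v : T, (degree (compl_adj adj) v <= t + 1)%N.
Proof.
move=> [sym irr] cardT n0 evn l2 AW cardE t1 v.
rewrite leqNgt; apply/negP => dv.
set H := compl_adj adj in cardE dv *.
have Hsym : forall x y, H x y = H y x.
  by move=> x y; rewrite /H /compl_adj eq_sym sym.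
have Hirr : forall x, H x x = false by move=> x; rewrite /H /compl_adj eqxx.
have key : forall a z, (a \in closed_nbhd adj z) = (z == a) || ~~ H a z.
  move=> a z; rewrite /closed_nbhd inE /H /compl_adj.
  case: (eqVneq z a) => [->|neq] //=.
  by rewrite negbK sym.
pose Y := [set x | (x != v) && [forall y, H x y ==> (y == v)]].
pose Y1 := [set x in Y | ~~ H x v].
pose Y2 := [set x in Y | H x v].
have cY1 : (#|Y1| <= 1)%N.
  apply/card_le1_eqP => a b; rewrite !inE => /andP[/andP[av /forallP fa] nav]
    /andP[/andP[bv /forallP fb] nbv].
  apply/eqP; apply/negPn/negP => nab.
  apply: (@notAW_of_twins T adj l _ _ nab _ AW) => z.
  have na : ~~ H a z.
    by apply/negP => haz; move: (implyP (fa z) haz) nav => /eqP zv; rewrite -zv haz.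
  have nb : ~~ H b z.
    by apply/negP => hbz; move: (implyP (fb z) hbz) nbv => /eqP zv; rewrite -zv hbz.
  by rewrite !key na nb !orbT.
have cY2 : (#|Y2| <= 1)%N.
  apply/card_le1_eqP => a b; rewrite !inE => /andP[/andP[av /forallP fa] hav]
    /andP[/andP[bv /forallP fb] hbv].
  apply/eqP; apply/negPn/negP => nab.
  apply: (@notAW_of_twins T adj l _ _ nab _ AW) => z.
  have ea : H a z = (z == v).
    by apply/idP/idP => [/(implyP (fa z))//|/eqP ->].
  have eb : H b z = (z == v).
    by apply/idP/idP => [/(implyP (fb z))//|/eqP ->].
  rewrite !key ea eb.
  case: (eqVneq z a) => [->|za]; first by rewrite av orbT.
  rewrite /=; case: (eqVneq z b) => [->|zb] //=.
have cY : (#|Y| <= 2)%N.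
  have sub : Y \subset Y1 :|: Y2.
    apply/subsetP => x xY; rewrite !inE; move: xY; rewrite !inE => /andP[-> ->].
    by case: (H x v).
  apply: leq_trans (subset_leq_card sub) _.
  by rewrite cardsU; lia.
pose E := edge_set H.
pose S := [set u | H v u].
pose E' := [set e in E | v \notin e].
pose star := [set [set v; u] | u in S].
have cstar : #|star| = degree H v.
  rewrite card_in_imset // => u u'; rewrite !inE => hu hu' eq.
  have : u \in [set v; u'] by rewrite -eq set22.

  rewrite !inE => /orP[/eqP uv|/eqP //].
  by move: hu; rewrite uv Hirr.
have cE : (#|star| + #|E'| <= #|E|)%N.
  rewrite -(cardsID star E).
  have -> : E :&: star = star.
    apply/setIidPr/subsetP => e /imsetP[u]; rewrite inE => hu ->.
    rewrite /E /edge_set inE; apply/existsP; exists v; apply/existsP; exists u.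
    by rewrite hu eqxx.
  rewrite leq_add2l; apply: subset_leq_card; apply/subsetP => e.
  rewrite !inE => /andP[eE nv]; rewrite eE andbT.
  apply/imsetP => -[u _ ee]; move: nv; by rewrite ee set21.
pose X := [set~ v] :\: Y.
have cX : (#|[set~ v]| - #|Y| <= #|X|)%N.
  by rewrite cardsD leq_sub2l // subset_leq_card // subsetIr.
have sX : X \subset \bigcup_(e in E') e.
  apply/subsetP => x; rewrite !inE => /andP[nY xv].
  move: nY; rewrite xv /= => /forallPn[y]; rewrite negb_imply => /andP[hxy yv].
  apply/bigcupP; exists [set x; y]; last by rewrite set21.
  rewrite !inE negb_or eq_sym xv eq_sym yv andbT.
  rewrite andbT; apply/existsP; exists x; apply/existsP; exists y; by rewrite hxy eqxx.
have cE' : (#|X| <= 2 * #|E'|)%N.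
  apply: leq_trans (subset_leq_card sX) _.
  apply: leq_trans (@card_bigcup_le T E') _.
  apply: leq_trans (_ : (\sum_(e in E') 2 <= _)%N); last first.
    by rewrite sum_nat_const mulnC.
  apply: leq_sum => e; rewrite !inE => /andP[/existsP[x /existsP[y /andP[_ /eqP ->]]] _].
  by rewrite cards2; case: (x != y).
move: cX; rewrite cardsC1 cardT => cX.
have := modn2 n; rewrite (negbTE evn) => n2.
rewrite -cstar in dv.
have : #|E| = (n %/ 2 + t)%N by [].
lia.
Qed.
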